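(* Let $M$ be a quad-flower with standard labelling. Then: (i) if $C$ is a non-spanning circuit of $M$, then $|C|\in\{4,6\}$; (ii) if $C$ is a circuit of $M$ with $|C|=4$, then $C$ is one of the $15$ four-element circuits listed in the definition of a quad-flower (the sets $\{p_i,q_i,s_i,t_i\}$ and the sets in condition (2) of the definition); (iii) for any $(i,j,k)\in\{(1,2,3),(2,3,1),(3,1,2)\}$ and any $Z_i\in\{\{p_i,q_i\},\{s_i,t_i\}\}$, $Z_j\in\{\{p_j,t_j\},\{q_j,s_j\}\}$, $Z_k\in\{\{p_k,s_k\},\{q_k,t_k\}\}$, the set $Z_i\cup Z_j\cup Z_k$ is a $6$-element circuit of $M$; (iv) if $C$ is a circuit of $M$ with $|C|=6$ that is not one of the circuits described in (iii), then $C=X_J$ for some $J\subseteq\{1,2,3\}$.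
   Context: A matroid $M$ is a quad-flower if $r(M)=r^*(M)=6$ and its ground set has a labelling $\bigcup_{\ell\in\{1,2,3\}}\{p_\ell,q_\ell,s_\ell,t_\ell\}$ such that for all $(i,j)\in\{(1,2),(2,3),(3,1)\}$: (1) $\{p_i,q_i,s_i,t_i\}$ is a circuit and a cocircuit; (2) $\{p_i,q_i,p_j,s_j\}$, $\{p_i,q_i,q_j,t_j\}$, $\{s_i,t_i,p_j,s_j\}$, $\{s_i,t_i,q_j,t_j\}$ are circuits; (3) $\{p_i,s_i,p_j,q_j\}$, $\{p_i,s_i,s_j,t_j\}$, $\{q_i,t_i,p_j,q_j\}$, $\{q_i,t_i,s_j,t_j\}$ are cocircuits. $M$ has standard labelling if its ground set is literally $\{p_\ell,q_\ell,s_\ell,t_\ell:\ell=1,2,3\}$ with this labelling being the identity. For $J\subseteq\{1,2,3\}$, $X_J$ denotes the $6$-element set containing $\{p_i,t_i\}$ for each $i\in J$ and $\{q_i,s_i\}$ for each $i\in\{1,2,3\}-J$. *)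

(* Defs.v *)
From mathcomp Require Import all_boot.
Set Implicit Arguments. Unset Strict Implicit. Unset Printing Implicit Defensive.

Record matroid (T : finType) := Matroid {
  indep : {set T} -> bool;
  indep0 : indep set0;
  indep_sub : forall A B : {set T}, A \subset B -> indep B -> indep A;
  indep_aug : forall A B : {set T}, indep A -> indep B -> #|A| < #|B| ->
     exists2 x, x \in B :\: A & indep (x |: A)
}.

Section MatroidNotions.
Variables (T : finType) (M : matroid T).

Definition rk (X : {set T}) : nat :=
  \max_(I : {set T} | (I \subset X) && indep M I) #|I|.
Definition mrank : nat := rk setT.
Definition basis (B : {set T}) : bool := maxset (indep M) B.
Definition circuit (C : {set T}) : bool := minset (fun X => ~~ indep M X) C.
Definition dual_indep (X : {set T}) : bool :=
  [exists B : {set T}, basis B && [disjoint X & B]].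
Definition corank : nat := \max_(I : {set T} | dual_indep I) #|I|.
Definition cocircuit (C : {set T}) : bool := minset (fun X => ~~ dual_indep X) C.
Definition spanning (X : {set T}) : bool := rk X == mrank.
End MatroidNotions.

(* Labels: E = 'I_4 * 'I_3, letter 0,1,2,3 = p,q,s,t; index 0,1,2 = 1,2,3 *)
Definition E : finType := ('I_4 * 'I_3)%type.
Definition pl (i : 'I_3) : E := (@Ordinal 4 0 isT, i).
Definition ql (i : 'I_3) : E := (@Ordinal 4 1 isT, i).
Definition sl (i : 'I_3) : E := (@Ordinal 4 2 isT, i).
Definition tl (i : 'I_3) : E := (@Ordinal 4 3 isT, i).

(* cyclic successor: (i, nxt i) ranges over (1,2),(2,3),(3,1) *)
Definition nxt (i : 'I_3) : 'I_3 := ordS i.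

Section QuadFlower.
Variables (T : finType) (M : matroid T) (lab : E -> T).
Let p i := lab (pl i). Let q i := lab (ql i).
Let s i := lab (sl i). Let t i := lab (tl i).

Definition quad_flower_labelling : Prop :=
  bijective lab /\ mrank M = 6 /\ corank M = 6 /\
  forall i : 'I_3, let j := nxt i in
    [/\ circuit M [set p i; q i; s i; t i],
        cocircuit M [set p i; q i; s i; t i],
        [/\ circuit M [set p i; q i; p j; s j], circuit M [set p i; q i; q j; t j],
            circuit M [set s i; t i; p j; s j] & circuit M [set s i; t i; q j; t j]]
      & [/\ cocircuit M [set p i; s i; p j; q j], cocircuit M [set p i; s i; s j; t j],
            cocircuit M [set q i; t i; p j; q j] & cocircuit M [set q i; t i; s j; t j]]].
End QuadFlower.

Definition quad_flower (T : finType) (M : matroid T) : Prop :=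
  exists lab, quad_flower_labelling M lab.

Definition quad_flower_std (M : matroid E) : Prop := quad_flower_labelling M id.

Definition listed4 (C : {set E}) : Prop :=
  exists i : 'I_3, let j := nxt i in
    C = [set pl i; ql i; sl i; tl i] \/ C = [set pl i; ql i; pl j; sl j] \/
    C = [set pl i; ql i; ql j; tl j] \/ C = [set sl i; tl i; pl j; sl j] \/
    C = [set sl i; tl i; ql j; tl j].

Definition Zset (i : 'I_3) (a b c : bool) : {set E} :=
  let j := nxt i in let k := nxt j in
  (if a then [set pl i; ql i] else [set sl i; tl i]) :|:
  (if b then [set pl j; tl j] else [set ql j; sl j]) :|:
  (if c then [set pl k; sl k] else [set ql k; tl k]).

Definition XJ (J : {set 'I_3}) : {set E} :=
  \bigcup_(i : 'I_3) (if i \in J then [set pl i; tl i] else [set ql i; sl i]).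

(* Main.v *)
Require Import Defs.
From mathcomp Require Import all_boot zify.
Set Implicit Arguments. Unset Strict Implicit. Unset Printing Implicit Defensive.

Definition o0 : 'I_3 := @Ordinal 3 0 isT.
Definition o1 : 'I_3 := @Ordinal 3 1 isT.
Definition o2 : 'I_3 := @Ordinal 3 2 isT.
Definition ords := [:: o0; o1; o2].
Definition bs2 := [:: true; false].
Definition els : seq E :=
  [:: pl o0; ql o0; sl o0; tl o0; pl o1; ql o1; sl o1; tl o1; pl o2; ql o2; sl o2; tl o2].

Definition circL (i : 'I_3) : seq (seq E) := let j := nxt i in
  [:: [:: pl i; ql i; sl i; tl i]; [:: pl i; ql i; pl j; sl j]; [:: pl i; ql i; ql j; tl j];
      [:: sl i; tl i; pl j; sl j]; [:: sl i; tl i; ql j; tl j]].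
Definition cocL (i : 'I_3) : seq (seq E) := let j := nxt i in
  [:: [:: pl i; ql i; sl i; tl i]; [:: pl i; sl i; pl j; ql j]; [:: pl i; sl i; sl j; tl j];
      [:: ql i; tl i; pl j; ql j]; [:: ql i; tl i; sl j; tl j]].
Definition circs := flatten (map circL ords).
Definition cocs := flatten (map cocL ords).

Definition zl (i : 'I_3) (a b c : bool) : seq E :=
  let j := nxt i in let k := nxt j in
  (if a then [:: pl i; ql i] else [:: sl i; tl i]) ++
  (if b then [:: pl j; tl j] else [:: ql j; sl j]) ++
  (if c then [:: pl k; sl k] else [:: ql k; tl k]).
Definition xl (b0 b1 b2 : bool) : seq E :=
  (if b0 then [:: pl o0; tl o0] else [:: ql o0; sl o0]) ++
  (if b1 then [:: pl o1; tl o1] else [:: ql o1; sl o1]) ++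
  (if b2 then [:: pl o2; tl o2] else [:: ql o2; sl o2]).

Definition idx (x : E) : nat := 4 * nat_of_ord x.2 + nat_of_ord x.1.
Definition memb (bs : seq bool) (x : E) := nth false bs (idx x).
Definition nmemb (bs : seq bool) (n : nat) := nth false bs n.
Definition enc (s : seq E) : seq bool := let m := map idx s in [seq n \in m | n <- iota 0 12].
Definition goodN (cs ci : seq (seq nat)) bs :=
  let n := count id bs in
  [&& 0 < n, n <= 6,
      all (fun D => count (nmemb bs) D != 1) cs &
      all (fun L => ~~ all (nmemb bs) L || (n == 4)) ci].
Definition isZ bs := has (fun i => has (fun a => has (fun b => has (fun c =>
   bs == enc (zl i a b c)) bs2) bs2) bs2) ords.
Definition isX bs := has (fun a => has (fun b => has (fun c =>
   bs == enc (xl a b c)) bs2) bs2) bs2.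
Definition checkN cs ci bs := if goodN cs ci bs then
  ((count id bs == 4) && has (fun L => bs == enc L) circs) ||
  ((count id bs == 6) && (isZ bs || isX bs)) else true.
Definition cocsN := map (map idx) cocs.
Definition circsN := map (map idx) circs.
Definition step (l : seq (seq bool)) := [seq b :: x | b <- bs2, x <- l].
Definition allbs := iter 12 step [:: [::]].

Lemma check_all : let cs := cocsN in let ci := circsN in all (checkN cs ci) allbs.
Proof. vm_compute. reflexivity. Qed.

Definition zgood i a b c :=
  [&& uniq (zl i a b c), size (zl i a b c) == 6,
      all (fun L => ~~ all (fun x => x \in zl i a b c) L) circs &
      has (fun D => all (fun x => x \notin zl i a b c) D) cocs].
Lemma zgood_all : all (fun i => all (fun a => all (fun b => all (fun c =>
   zgood i a b c) bs2) bs2) bs2) ords.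
Proof. vm_compute. reflexivity. Qed.
Lemma lists_ok : all (fun L => uniq L && (size L == 4)) circs && all uniq cocs && uniq els.
Proof. vm_compute. reflexivity. Qed.

Section Mat.
Variables (T : finType) (M : matroid T).

Lemma indep_le (I : {set T}) : indep M I -> #|I| <= mrank M.
Proof. move=> HI; rewrite /mrank /rk; apply: (@leq_bigmax_cond _ _ (fun I : {set T} => #|I|) I). by rewrite subsetT HI. Qed.

Lemma rk_le (X : {set T}) : rk M X <= mrank M.
Proof. apply/bigmax_leqP => I /andP[_ HI]; exact: indep_le. Qed.

Lemma rk_ge (X I : {set T}) : I \subset X -> indep M I -> #|I| <= rk M X.
Proof. move=> s HI; rewrite /rk; apply: (@leq_bigmax_cond _ _ (fun I : {set T} => #|I|) I); by rewrite s HI. Qed.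

Lemma exists_max : exists2 I, indep M I & #|I| = mrank M.
Proof.
have [|I0 HI0 Heq] := @eq_bigmax_cond _ [pred I : {set T} | (I \subset setT) && indep M I] (fun I => #|I|).
  apply/card_gt0P; exists set0; by rewrite inE subsetT indep0.
exists I0; first by move: HI0; rewrite inE => /andP[].
by rewrite /mrank /rk Heq.
Qed.

Lemma augment (A B : {set T}) : indep M A -> indep M B ->
  exists A', [/\ indep M A', A \subset A', A' \subset A :|: B & #|B| <= #|A'|].
Proof.
move: {2}(#|B| - #|A|) (leqnn (#|B| - #|A|)) => k.
elim: k A => [|k IH] A Hk HA HB.
  exists A; split=> //; [exact: subsetUl| lia].
case: (leqP #|B| #|A|) => Hc.
  exists A; split=> //; exact: subsetUl.
have [x /setDP [xB xA] Hx] := indep_aug HA HB Hc.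
have Hcard : #|x |: A| = #|A|.+1 by rewrite cardsU1 xA.
have [|A' [H1 H2 H3 H4]] := IH (x |: A) _ Hx HB; first lia.
exists A'; split=> //.
  apply: subset_trans H2; exact: subsetU1.
apply: (subset_trans H3); apply/subsetP => y; rewrite !inE.
by case/orP => [/orP[/eqP->|->]|->]; rewrite ?xB ?orbT.
Qed.

Lemma basis_card (B : {set T}) : basis M B -> #|B| = mrank M.
Proof.
move/maxsetP => [HB Hmax]; apply/eqP; rewrite eqn_leq indep_le //=.
have [I HI <-] := exists_max.
rewrite leqNgt; apply/negP => Hlt.
have [x /setDP [xI xB] Hx] := indep_aug HB HI Hlt.
have := Hmax _ Hx (subsetU1 x B) => Heq.
by move: xB; rewrite -Heq setU11.
Qed.

Lemma card_basis (A : {set T}) : indep M A -> mrank M <= #|A| -> basis M A.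
Proof.
move=> HA Hc; apply/maxsetP; split=> // Y HY sub.
apply/esym/eqP; rewrite eqEcard sub /=.
exact: leq_trans (indep_le HY) Hc.
Qed.

Lemma circ_dep (C : {set T}) : circuit M C -> ~~ indep M C.
Proof. by case/minsetP. Qed.

Lemma circ_min (C X : {set T}) : circuit M C -> X \subset C -> ~~ indep M X -> X = C.
Proof. case/minsetP => _ H s d; exact: H. Qed.

Lemma circ_proper (C X : {set T}) : circuit M C -> X \proper C -> indep M X.
Proof.
move=> HC /andP [s ns]; apply/negPn/negP => d.
by move: ns; rewrite (circ_min HC s d) subxx.
Qed.

Lemma cocirc_dep (D : {set T}) : cocircuit M D -> ~~ dual_indep M D.
Proof. by case/minsetP. Qed.

Lemma cocirc_proper (D X : {set T}) : cocircuit M D -> X \proper D -> dual_indep M X.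
Proof.
case/minsetP => _ H /andP [s ns]; case: (boolP (dual_indep M X)) => // d.
by move: ns; rewrite (H _ d s) subxx.
Qed.

Lemma orth (C D : {set T}) : circuit M C -> cocircuit M D -> #|C :&: D| != 1.
Proof.
move=> HC HD; apply/negP => /cards1P [e He].
have : e \in C :&: D by rewrite He set11.
rewrite inE => /andP [eC eD].
have /existsP [B /andP [HB Hdis]] := cocirc_proper HD (properD1 eD).
have HA : indep M (C :\ e) := circ_proper HC (properD1 eC).
have HBi : indep M B by case/maxsetP: HB.
have [A' [HA' s1 s2 Hc]] := augment HA HBi.
have eA' : e \notin A'.
  apply/negP => eA.
  have sub : C \subset A'.
    apply/subsetP => y yC; case: (eqVneq y e) => [->//|ne].
    apply: (subsetP s1); by rewrite !inE ne yC.
  by move: (circ_dep HC); rewrite (indep_sub sub HA').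
have bA' : basis M A' by apply: card_basis => //; rewrite -(basis_card HB).
move/negP: (cocirc_dep HD); apply; apply/existsP; exists A'; rewrite bA' /=.
rewrite disjoint_subset; apply/subsetP => x xD; rewrite inE; apply/negP => xA.
have xe : x != e by apply: contraNneq eA' => <-.
move: (subsetP s2 x xA); rewrite !inE xe /= => /orP [xC|xB].
  have : x \in C :&: D by rewrite inE xC xD.
  by rewrite He inE (negbTE xe).
have xDe : x \in D :\ e by rewrite !inE xe xD.
by rewrite (disjointFr Hdis xDe) in xB.
Qed.

Lemma circ_card (C : {set T}) : circuit M C -> 0 < #|C| /\ #|C| <= (mrank M).+1.
Proof.
move=> HC.
have [e eC] : exists e, e \in C.
  apply/set0Pn; apply/negP => /eqP C0; move: (circ_dep HC); by rewrite C0 indep0.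
have HA := circ_proper HC (properD1 eC).
have := indep_le HA; rewrite (cardsD1 e C) eC; split=> //.
Qed.

Lemma circ_spanning (C : {set T}) : circuit M C -> #|C| = (mrank M).+1 -> spanning M C.
Proof.
move=> HC Hc.
have [e eC] : exists e, e \in C.
  apply/set0Pn; apply/negP => /eqP C0; move: Hc; by rewrite C0 cards0.
have HA := circ_proper HC (properD1 eC).
have := rk_ge (subD1set C e) HA; rewrite /spanning.
move: Hc; rewrite (cardsD1 e C) eC add1n => -[->] Hge.
by rewrite eqn_leq rk_le Hge.
Qed.
End Mat.

Definition setof (s : seq E) : {set E} := [set x | x \in s].

Lemma idx_lt (x : E) : idx x < 12.
Proof. case: x => [[l Hl] [i Hi]]; rewrite /idx /=; lia. Qed.

Lemma idx_inj : injective idx.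
Proof.
case=> [[l Hl] [i Hi]] [[l' Hl'] [i' Hi']]; rewrite /idx /= => H.
have e1 : l = l' by lia.
have e2 : i = i' by lia.
subst; congr (_, _); exact/val_inj.
Qed.

Definition encS (C : {set E}) : seq bool :=
  [seq n \in map idx (enum C) | n <- iota 0 12].

Lemma encS_size C : size (encS C) = 12.
Proof. by rewrite size_map size_iota. Qed.

Lemma encS_nth C x : nth false (encS C) (idx x) = (x \in C).
Proof.
rewrite (nth_map 0) ?size_iota ?idx_lt // nth_iota ?idx_lt // add0n.
by rewrite (mem_map idx_inj) mem_enum.
Qed.

Lemma enc_nth s x : nth false (enc s) (idx x) = (x \in s).
Proof.
rewrite /enc (nth_map 0) ?size_iota ?idx_lt // nth_iota ?idx_lt // add0n.
by rewrite (mem_map idx_inj).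
Qed.

Lemma count_mem_sub (s t : seq nat) : uniq s -> uniq t -> {subset t <= s} ->
  count (fun n => n \in t) s = size t.
Proof.
move=> us ut sub; rewrite -size_filter; apply/perm_size/uniq_perm.
- exact: filter_uniq.
- exact: ut.
- move=> x; rewrite mem_filter; case xt: (x \in t) => //=; exact: sub.
Qed.

Lemma encS_count C : count id (encS C) = #|C|.
Proof.
rewrite count_map cardE -(size_map idx).
have -> : count (preim (fun n => n \in map idx (enum C)) id) (iota 0 12) =
          count (fun n => n \in map idx (enum C)) (iota 0 12) by [].
apply: count_mem_sub.
- exact: iota_uniq.
- rewrite map_inj_uniq ?enum_uniq //; exact: idx_inj.
- move=> n /mapP [x _ ->]; rewrite mem_iota add0n idx_lt; done.
Qed.

Lemma card_setof (s : seq E) : uniq s -> #|setof s| = size s.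
Proof.
move=> us; rewrite -(card_uniqP us); apply: eq_card => x; by rewrite inE.
Qed.

Lemma card_inter (C : {set E}) (s : seq E) : uniq s ->
  #|C :&: setof s| = count (fun x => x \in C) s.
Proof.
move=> us; rewrite -size_filter.
have u2 := filter_uniq (fun x => x \in C) us.
rewrite -(card_uniqP u2); apply: eq_card => x; by rewrite !inE mem_filter.
Qed.

Lemma setof_enc (C : {set E}) (s : seq E) : encS C = enc s -> C = setof s.
Proof.
move=> H; apply/setP => x; by rewrite inE -encS_nth H enc_nth.
Qed.

Lemma mem_allbs bs : size bs = 12 -> bs \in allbs.
Proof.
rewrite /allbs; move: 12 => n; elim: n bs => [|n IH] [|b bs] //=.
move=> [Hs]; apply: (allpairs_f (fun b x => b :: x)); first by case: b.
exact: IH.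
Qed.

Lemma set4 (a b c d : E) : [set a; b; c; d] = setof [:: a; b; c; d].
Proof. by apply/setP => x; rewrite !inE ?orbA. Qed.

Lemma mem_ords (i : 'I_3) : i \in ords.
Proof. by case: i => [[|[|[|n]]] Hi]. Qed.

Lemma mem_bs2 (b : bool) : b \in bs2.
Proof. by case: b. Qed.

Lemma Zset_eq i a b c : Zset i a b c = setof (zl i a b c).
Proof.
rewrite /Zset /zl /setof; apply/setP => x.
by case: a; case: b; case: c; rewrite /= !inE ?orbA.
Qed.

Lemma bigcup3 (F : 'I_3 -> {set E}) : \bigcup_(i : 'I_3) F i = F o0 :|: (F o1 :|: F o2).
Proof.
rewrite !big_ord_recl big_ord0 setU0.
by congr (F _ :|: (F _ :|: F _)); apply/val_inj.
Qed.

Lemma XJ_eq a b c : XJ [set i : 'I_3 | nth false [:: a; b; c] i] = setof (xl a b c).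
Proof.
rewrite /XJ bigcup3 /setof /xl; apply/setP => x; rewrite !inE /=.
case: x => [[[|[|[|[|l]]]] Hl] [[|[|[|i]]] Hi]] //;
  by case: a; case: b; case: c; rewrite /= !inE.
Qed.

Lemma check_spec bs : bs \in allbs -> goodN cocsN circsN bs ->
  ((count id bs == 4) && has (fun L => bs == enc L) circs) ||
  ((count id bs == 6) && (isZ bs || isX bs)).
Proof. move=> H G; have := allP check_all bs H; rewrite /checkN G; move=> K; exact: K. Qed.

Lemma in5 (T : eqType) (x a b c d e : T) : x \in [:: a; b; c; d; e] ->
  x = a \/ x = b \/ x = c \/ x = d \/ x = e.
Proof.
rewrite !inE ?orbF.
by move=> /orP [/eqP->|/orP [/eqP->|/orP [/eqP->|/orP [/eqP->|/eqP->]]]];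
  [left|right;left|right;right;left|right;right;right;left|right;right;right;right].
Qed.

Section QF.
Variable M : matroid E.
Hypothesis HM : quad_flower_std M.

Lemma HMr : mrank M = 6.
Proof. by case: HM => _ [-> _]. Qed.

Lemma circ_all L : L \in circs -> circuit M (setof L).
Proof.
move=> /flattenP [Ls /mapP [i _ ->]].
case: HM => _ [_ [_ H]]; have [H1 H2 [H3 H4 H5 H6] _] := H i.
by case/in5 => [->|[->|[->|[->|->]]]]; rewrite -set4.
Qed.

Lemma coc_all D : D \in cocs -> cocircuit M (setof D).
Proof.
move=> /flattenP [Ls /mapP [i _ ->]].
case: HM => _ [_ [_ H]]; have [H1 H2 _ [H3 H4 H5 H6]] := H i.
by case/in5 => [->|[->|[->|[->|->]]]]; rewrite -set4.
Qed.

Lemma classify C : circuit M C -> #|C| <= 6 ->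
 (#|C| = 4 /\ exists2 L, L \in circs & C = setof L) \/
 (#|C| = 6 /\ ((exists i a b c, C = setof (zl i a b c)) \/
               (exists a b c, C = setof (xl a b c)))).
Proof.
move=> HC Hc.
have [c0 _] := circ_card HC.
have /andP [/andP [uc uo] ue] := lists_ok.
have := check_spec (mem_allbs (encS_size C)).
rewrite encS_count.
have G : goodN cocsN circsN (encS C).
  rewrite /goodN encS_count; apply/and4P; split => //.
  - rewrite all_map; apply/allP => D HD /=.
    rewrite count_map.
    have -> : count (preim idx (nmemb (encS C))) D = count (fun x => x \in C) D.
      by apply: eq_count => x; rewrite /preim /nmemb /= encS_nth.
    rewrite -card_inter ?(allP uo D HD) //.
    exact: orth HC (coc_all HD).
  - rewrite all_map; apply/allP => L HL /=.
    rewrite all_map.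
    have -> : all (preim idx (nmemb (encS C))) L = all (fun x => x \in C) L.
      by apply: eq_all => x; rewrite /preim /nmemb /= encS_nth.
    case Hall: (all _ L) => //=.
    have sub : setof L \subset C.
      by apply/subsetP => x; rewrite inE => /(allP Hall).
    have eq := circ_min HC sub (circ_dep (circ_all HL)).
    have /andP [uL /eqP sL] := allP uc L HL.
    by rewrite -eq card_setof // sL.
move=> /(_ G) /orP [/andP [/eqP H4 /hasP [L HL /eqP He]] | /andP [/eqP H6 /orP [HZ | HX]]].
- left; split=> //; exists L => //; exact: setof_enc.
- right; split=> //; left.
  move: HZ => /hasP [i _ /hasP [a _ /hasP [b _ /hasP [c _ /eqP He]]]].
  exists i, a, b, c; exact: setof_enc.
- right; split=> //; right.
  move: HX => /hasP [a _ /hasP [b _ /hasP [c _ /eqP He]]].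
  exists a, b, c; exact: setof_enc.
Qed.
End QF.

Theorem lemma3p1 (M : matroid E) (HM : quad_flower_std M) :
  [/\ (forall C : {set E}, circuit M C -> ~~ spanning M C -> #|C| = 4 \/ #|C| = 6),
      (forall C : {set E}, circuit M C -> #|C| = 4 -> listed4 C),
      (forall (i : 'I_3) (a b c : bool), circuit M (Zset i a b c) /\ #|Zset i a b c| = 6)
    & (forall C : {set E}, circuit M C -> #|C| = 6 ->
         ~ (exists (i : 'I_3) (a b c : bool), C = Zset i a b c) ->
         exists J : {set 'I_3}, C = XJ J)].
Proof.
have Mr := HMr HM.
split.
- move=> C HC Hns.
  have [c0 c7] := circ_card HC; rewrite Mr in c7.
  have c6 : #|C| <= 6.
    rewrite leqNgt; apply/negP => H7.
    have e7 : #|C| = (mrank M).+1 by rewrite Mr; lia.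
    by rewrite (circ_spanning HC e7) in Hns.
  by case: (classify HM HC c6) => [[-> _]|[-> _]]; [left|right].
- move=> C HC H4.
  have c6 : #|C| <= 6 by rewrite H4.
  case: (classify HM HC c6) => [[_ [L HL ->]]|[H6 _]]; last by lia.
  move: HL => /flattenP [Ls /mapP [i _ ->]].
  case/in5 => [->|[->|[->|[->|->]]]]; exists i; rewrite /= -!set4;
    by [left|right;left|right;right;left|right;right;right;left|right;right;right;right].
- move=> i a b c.
  have /and4P [uz /eqP sz hn hz] :=
    allP (allP (allP (allP zgood_all i (mem_ords i)) a (mem_bs2 a)) b (mem_bs2 b)) c (mem_bs2 c).
  rewrite Zset_eq card_setof // sz; split=> //.
  apply/minsetP; split.
  + apply/negP => Hind.
    move/hasP: hz => [D HD Hdis].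
    have bZ : basis M (setof (zl i a b c)).
      by apply: card_basis Hind _; rewrite Mr card_setof // sz.
    move/negP: (cocirc_dep (coc_all HM HD)); apply; apply/existsP.
    exists (setof (zl i a b c)); rewrite bZ /= disjoint_subset.
    by apply/subsetP => x; rewrite !inE => xD; apply: (allP Hdis x xD).
  + move=> B HB sB.
    have [C' HC' sC'] := minset_exists (P := fun X => ~~ indep M X) HB.
    have sCZ := subset_trans sC' sB.
    have cC' : #|C'| <= 6 by rewrite -sz -card_setof //; exact: subset_leq_card.
    case: (classify HM HC' cC') => [[_ [L HL HeL]] | [H6 _]].
      move: (allP hn L HL) => /negP; case.
      apply/allP => x xL.
      have : x \in setof L by rewrite inE.
      by rewrite -HeL => /(subsetP sCZ); rewrite inE.
    have eq : C' = setof (zl i a b c).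
      by apply/eqP; rewrite eqEcard sCZ card_setof // sz H6.
    by apply/eqP; rewrite eqEsubset sB /= -eq.
- move=> C HC H6 HnZ.
  have c6 : #|C| <= 6 by rewrite H6.
  case: (classify HM HC c6) => [[H4 _]|[_ [[i [a [b [c He]]]]|[a [b [c He]]]]]].
  + by lia.
  + by exfalso; apply: HnZ; exists i, a, b, c; rewrite Zset_eq.
  + by exists [set i : 'I_3 | nth false [:: a; b; c] i]; rewrite XJ_eq.
Qed.
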